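(* Let $L$ be a finite-dimensional pure, nonnilpotent, solvable Lie algebra over $\mathbb{C}$ of breadth $2$ such that $\dim[L,L]=3$ and $\dim\big(L/Z(L)\big)=3$. Then $[L,L]$ is isomorphic to the $3$-dimensional Heisenberg Lie algebra (i.e. it has a basis $\{x,y,z\}$ with $[x,y]=z$ and $[x,z]=[y,z]=0$).
   Context: For $x\in L$, $b(x)=\mathrm{rank}(\mathrm{ad}_x)$ and the breadth of $L$ is $b(L)=\max\{b(x)\mid x\in L\}$. $L$ is pure if it has no abelian ideal as a direct summand; equivalently $Z(L)\subseteq[L,L]$, where $Z(L)$ is the center. *)

(* Defs.v *)
(* Finite-dimensional Lie algebras over a field F are modelled
   as the coordinate space 'rV[F]_n equipped with a bracket map. *)
From HB Require Import structures.
From mathcomp Require Import all_boot all_algebra.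
From mathcomp Require Import reals.
From mathcomp Require Export complex.
Set Implicit Arguments. Unset Strict Implicit. Unset Printing Implicit Defensive.
Import GRing.Theory.
Local Open Scope ring_scope.

Section Lie.
Variables (F : fieldType) (n : nat).
Notation V := 'rV[F]_n.
Variable br : V -> V -> V.

Definition is_lie : Prop :=
  [/\ forall (a : F) (x y z : V), br (a *: x + y) z = a *: br x z + br y z,
      forall (a : F) (x y z : V), br z (a *: x + y) = a *: br z x + br z y,
      forall x : V, br x x = 0
    & forall x y z : V, br x (br y z) + br y (br z x) + br z (br x y) = 0].

(* [U, W] : the subspace spanned by all brackets [u, w], u in U, w in W
   (spanned by the brackets of basis vectors, by bilinearity). *)
Definition brv (U W : {vspace V}) : {vspace V} :=
  (\sum_(i < \dim U) \sum_(j < \dim W)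
     <[br (tnth (vbasis U) i) (tnth (vbasis W) j)]>)%VS.

Definition derived : {vspace V} := brv fullv fullv.

(* center Z(L) = {x | forall y, [x, y] = 0}, as the intersection of the
   kernels of x |-> [x, e_j] over the standard basis e_j. *)
Definition centerv : {vspace V} :=
  (\bigcap_(j < n) lker (linfun (fun x : V => br x (delta_mx ord0 j))))%VS.

Fixpoint lcs (k : nat) : {vspace V} :=
  if k is k'.+1 then brv fullv (lcs k') else fullv.
Fixpoint dser (k : nat) : {vspace V} :=
  if k is k'.+1 then brv (dser k') (dser k') else fullv.

Definition nilpotent : Prop := exists k, lcs k = 0%VS.
Definition solvable : Prop := exists k, dser k = 0%VS.

Definition pure : Prop := (centerv <= derived)%VS.

Definition breadth_at (x : V) : nat := \dim (limg (linfun (br x))).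
Definition has_breadth (b : nat) : Prop :=
  (forall x, (breadth_at x <= b)%N) /\ exists x, breadth_at x = b.

End Lie.

(* Main.v *)
Require Import Defs.
From HB Require Import structures.
From mathcomp Require Import all_boot all_algebra.
From mathcomp Require Import reals.
From mathcomp Require Import complex.
From mathcomp Require Import ring.
Set Implicit Arguments. Unset Strict Implicit. Unset Printing Implicit Defensive.
Import GRing.Theory.
Local Open Scope ring_scope.
Section Gen.
Variables (F : fieldType) (n : nat).
Notation V := 'rV[F]_n.
Variable br : V -> V -> V.
Hypotheses (HL1 : forall (a : F) (x y z : V), br (a *: x + y) z = a *: br x z + br y z)
  (HL2 : forall (a : F) (x y z : V), br z (a *: x + y) = a *: br z x + br z y)
  (HL3 : forall x : V, br x x = 0)
  (HL4 : forall x y z : V, br x (br y z) + br y (br z x) + br z (br x y) = 0).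

Lemma brDl x y z : br (x + y) z = br x z + br y z.
Proof. by have := HL1 1 x y z; rewrite !scale1r. Qed.
Lemma brDr x y z : br z (x + y) = br z x + br z y.
Proof. by have := HL2 1 x y z; rewrite !scale1r. Qed.
Lemma br0l z : br 0 z = 0.
Proof. have H := brDl 0 0 z; rewrite addr0 in H. by apply: (addrI (br 0 z)); rewrite -H addr0. Qed.
Lemma br0r z : br z 0 = 0.
Proof. have H := brDr 0 0 z; rewrite addr0 in H. by apply: (addrI (br z 0)); rewrite -H addr0. Qed.
Lemma brZl k x z : br (k *: x) z = k *: br x z.
Proof. by have := HL1 k x 0 z; rewrite addr0 br0l addr0. Qed.
Lemma brZr k x z : br z (k *: x) = k *: br z x.
Proof. by have := HL2 k x 0 z; rewrite addr0 br0r addr0. Qed.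
Lemma brC x y : br y x = - br x y.
Proof.
apply/eqP; rewrite -addr_eq0 addrC.
by have := HL3 (x + y); rewrite brDl !brDr !HL3 add0r addr0 => ->.
Qed.
Lemma brNl x z : br (- x) z = - br x z.
Proof. by rewrite -scaleN1r brZl scaleN1r. Qed.
Lemma brNr x z : br z (- x) = - br z x.
Proof. by rewrite -scaleN1r brZr scaleN1r. Qed.

Lemma br_suml I (r : seq I) (P : pred I) f y :
  br (\sum_(i <- r | P i) f i) y = \sum_(i <- r | P i) br (f i) y.
Proof.
elim/big_rec2: _ => [|i x1 x2 _ <-]; first exact: br0l.
by rewrite brDl.
Qed.
Lemma br_sumr I (r : seq I) (P : pred I) f y :
  br y (\sum_(i <- r | P i) f i) = \sum_(i <- r | P i) br y (f i).
Proof.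
elim/big_rec2: _ => [|i x1 x2 _ <-]; first exact: br0r.
by rewrite brDr.
Qed.

Definition brl (e x : V) := br x e.
Lemma brl_linear e : linear (brl e).
Proof. by move=> k x y; rewrite /brl brDl brZl. Qed.
HB.instance Definition _ e := GRing.isLinear.Build F V V *:%R (brl e) (brl_linear e).

Lemma centerP x : x \in centerv br -> forall y, br x y = 0.
Proof.
rewrite memvE => /subv_bigcapP Hx y.
rewrite (row_sum_delta y) br_sumr big1 // => j _.
rewrite brZr; have := Hx j isT; rewrite -memvE memv_ker.
have E := lfunE (brl (delta_mx ord0 j)) x.
move=> H. by rewrite -[br x _]/(brl (delta_mx ord0 j) x) -E (eqP H) scaler0.
Qed.

Lemma centerP' x y : x \in centerv br -> br y x = 0.
Proof. by move=> /centerP H; rewrite brC H oppr0. Qed.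

Lemma brv_mem (U W : {vspace V}) u w : u \in U -> w \in W -> br u w \in brv br U W.
Proof.
move=> Uu Ww; rewrite (coord_vbasis Uu) (coord_vbasis Ww) br_suml.
apply: memv_sumr => i _; rewrite br_sumr; apply: memv_sumr => j _.
rewrite brZl brZr; apply: memvZ; apply: memvZ; rewrite (tnth_nth 0) (tnth_nth 0).
exact: memv_line.
Qed.

Lemma brv_sub (U W S : {vspace V}) : (forall u w, u \in U -> w \in W -> br u w \in S) ->
  (brv br U W <= S)%VS.
Proof.
move=> H; apply/subv_sumP => i _; apply/subv_sumP => j _.
by rewrite -memvE; apply: H; apply: vbasis_mem; apply: mem_tnth.
Qed.


Section Coord.
Variables a b c : V.
Notation Z := (centerv br).
Notation D := (derived br).
Hypothesis Hdec : forall x : V, exists (x1 x2 x3 : F) (zx : V), zx \in Z /\ x = x1 *: a + x2 *: b + x3 *: c + zx.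

Definition ab x1 x2 x3 := x1 *: a + x2 *: b + x3 *: c.
Definition lc k1 k2 k3 := k1 *: br a b + k2 *: br a c + k3 *: br b c.

Lemma C1 x y x1 x2 x3 y1 y2 y3 zx zy : zx \in Z -> zy \in Z ->
  x = ab x1 x2 x3 + zx -> y = ab y1 y2 y3 + zy ->
  br x y = lc (x1 * y2 - x2 * y1) (x1 * y3 - x3 * y1) (x2 * y3 - x3 * y2).
Proof.
move=> Zx Zy -> ->.
rewrite brDl (centerP Zx) addr0 brDr (centerP' _ Zy) addr0 /ab.
rewrite !brDl !brDr !brZl !brZr !HL3 (brC a b) (brC a c) (brC b c).
by apply/rowP => j; rewrite /lc !mxE; ring.
Qed.

Lemma lcD k1 k2 k3 l1 l2 l3 : lc k1 k2 k3 + lc l1 l2 l3 = lc (k1 + l1) (k2 + l2) (k3 + l3).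
Proof. by apply/rowP => j; rewrite /lc !mxE; ring. Qed.
Lemma lcN k1 k2 k3 : - lc k1 k2 k3 = lc (- k1) (- k2) (- k3).
Proof. by apply/rowP => j; rewrite /lc !mxE; ring. Qed.
Lemma lcZ s k1 k2 k3 : s *: lc k1 k2 k3 = lc (s * k1) (s * k2) (s * k3).
Proof. by apply/rowP => j; rewrite /lc !mxE; ring. Qed.

Lemma lc_span k1 k2 k3 : lc k1 k2 k3 \in <<[:: br a b; br a c; br b c]>>%VS.
Proof.
by rewrite /lc !memvD // memvZ // memv_span // !inE eqxx ?orbT.
Qed.

Lemma span3P (u v w x : V) : x \in <<[:: u; v; w]>>%VS ->
  exists k1 k2 k3, x = k1 *: u + k2 *: v + k3 *: w.
Proof.
rewrite !span_cons span_nil addv0 => /memv_addP[x1 /vlineP[k1 ->]].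
move=> [y /memv_addP[x2 /vlineP[k2 ->]] [x3 /vlineP[k3 ->]] ->] ->.
by exists k1, k2, k3; rewrite addrA.
Qed.

Lemma span2P (u v x : V) : x \in <<[:: u; v]>>%VS ->
  exists k1 k2, x = k1 *: u + k2 *: v.
Proof.
rewrite !span_cons span_nil addv0 => /memv_addP[x1 /vlineP[k1 ->]].
by move=> [x2 /vlineP[k2 ->]] ->; exists k1, k2.
Qed.

Hypotheses (HP : (Z <= D)%VS) (HD3 : \dim D = 3%N).

Lemma memD x y : br x y \in D.
Proof. exact: brv_mem (memvf _) (memvf _). Qed.

Lemma D_span : (D <= <<[:: br a b; br a c; br b c]>>)%VS.
Proof.
apply: brv_sub => u w _ _.
have [x1 [x2 [x3 [zx [Zx Ex]]]]] := Hdec u.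
have [y1 [y2 [y3 [zy [Zy Ey]]]]] := Hdec w.
rewrite (C1 Zx Zy Ex Ey); exact: lc_span.
Qed.

Lemma free3 : free [:: br a b; br a c; br b c].
Proof.
rewrite /free /= eqn_leq dim_span /= -{1}HD3; exact: dimvS D_span.
Qed.

Lemma lc_inj k1 k2 k3 : lc k1 k2 k3 = 0 -> [/\ k1 = 0, k2 = 0 & k3 = 0].
Proof.
move=> H; have /freeP Hf := free3.
pose k := fun i : 'I_3 => [:: k1; k2; k3]`_i.
have Hs : \sum_(i < 3) k i *: [:: br a b; br a c; br b c]`_i = 0.
  by rewrite !big_ord_recr big_ord0 /= add0r.
by split; [apply: (Hf _ Hs ord0) | apply: (Hf _ Hs (Ordinal (isT : 1 < 3)%N)) | apply: (Hf _ Hs ord_max)].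
Qed.

Lemma Dcoord x : x \in D -> exists k1 k2 k3, x = lc k1 k2 k3.
Proof. by move=> /(subvP D_span) /span3P. Qed.

Lemma final x y : x \in D -> y \in D -> br x y \in Z -> br x y != 0 ->
  exists x y z : V,
    [/\ basis_of D [:: x; y; z], br x y = z, br x z = 0 & br y z = 0].
Proof.
move=> Dx Dy Zxy nz; exists x, y, (br x y); split => //;
  last 2 first.
- exact: centerP' Zxy.
- exact: centerP' Zxy.
rewrite basisEfree HD3 /= leqnn andbT; apply/andP; split.
  rewrite free_cons free_cons seq1_free nz andbT; apply/andP; split.
    apply/negP => /span2P [k1 [k2 Ex]]; move/eqP: nz; apply.
    by rewrite {1}Ex brDl !brZl HL3 (centerP Zxy) !scaler0 addr0.
  apply/negP; rewrite span_seq1 => /vlineP [k Ey]; move/eqP: nz; apply.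
  by rewrite Ey brZr (centerP' _ Zxy) scaler0.
apply/span_subvP => v; rewrite !inE => /or3P[]/eqP->; by rewrite ?memD.
Qed.

Lemma eq0_tr (x y e : F) : e = 0 -> x - y = e -> x = y.
Proof. by move=> -> /subr0_eq. Qed.

Lemma ab0 e1 e2 e3 z : e1 = 0 -> e2 = 0 -> e3 = 0 -> z \in Z -> ab e1 e2 e3 + z \in Z.
Proof. by move=> -> -> -> Zz; rewrite /ab !scale0r !add0r. Qed.

Lemma main_coord : ~ nilpotent br -> solvable br ->
  exists x y z : V,
    [/\ basis_of D [:: x; y; z], br x y = z, br x z = 0 & br y z = 0].
Proof.
move=> Hnil Hsol.
have [p1 [p2 [p3 [zp [Zp Ep]]]]] := Hdec (br a b).
have [q1 [q2 [q3 [zq [Zq Eq]]]]] := Hdec (br a c).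
have [r1 [r2 [r3 [zr [Zr Er]]]]] := Hdec (br b c).
have ZS : forall k1 k2 k3, k1 *: zp + k2 *: zq + k3 *: zr \in Z.
  by move=> k1 k2 k3; rewrite !memvD ?memvZ.
have ea : a = ab 1 0 0 + 0 by rewrite /ab scale1r !scale0r !addr0.
have eb : b = ab 0 1 0 + 0 by rewrite /ab scale1r !scale0r add0r !addr0.
have ec : c = ab 0 0 1 + 0 by rewrite /ab scale1r !scale0r !add0r addr0.
have J := HL4 a b c.
rewrite (C1 (mem0v _) Zr ea Er) (brC a c) brNr (C1 (mem0v _) Zq eb Eq) in J.
rewrite (C1 (mem0v _) Zp ec Ep) lcN !lcD in J.
have [J1 J2 J3] := lc_inj J.
have e1 : r2 = - q1 by apply/subr0_eq; rewrite -J1; ring.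
have e2 : r3 = p1 by apply/subr0_eq; rewrite -J2; ring.
have e3 : p2 = - q3 by apply/subr0_eq; rewrite -[RHS]oppr0 -J3; ring.
subst r2 r3 p2.
have K : forall k1 k2 k3, lc k1 k2 k3 = ab (k1*p1+k2*q1+k3*r1) (k1*(-q3)+k2*q2+k3*(-q1))
   (k1*p3+k2*q3+k3*p1) + (k1 *: zp + k2 *: zq + k3 *: zr).
  move=> k1 k2 k3; rewrite /lc Ep Eq Er /ab; apply/rowP => j; rewrite !mxE; ring.
pose det := p1*p1*q2 + 2*p1*q1*q3 - q3*q3*r1 - p3*q1*q1 - p3*q2*r1.
have Hpq := C1 Zp Zq Ep Eq.
have Hpr := C1 Zp Zr Ep Er.
have Hqr := C1 Zq Zr Eq Er.
have [zpq [Zpq Epq]] : exists z, z \in Z /\ br (br a b) (br a c) = det *: a + z.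
  rewrite Hpq K; set z := (_ *: zp + _ *: zq + _ *: zr); exists z; split; first exact: ZS.
  by apply/rowP => j; rewrite /ab /det !mxE; ring.
have [zpr [Zpr Epr]] : exists z, z \in Z /\ br (br a b) (br b c) = det *: b + z.
  rewrite Hpr K; set z := (_ *: zp + _ *: zq + _ *: zr); exists z; split; first exact: ZS.
  by apply/rowP => j; rewrite /ab /det !mxE; ring.
have [zqr [Zqr Eqr]] : exists z, z \in Z /\ br (br a c) (br b c) = det *: c + z.
  rewrite Hqr K; set z := (_ *: zp + _ *: zq + _ *: zr); exists z; split; first exact: ZS.
  by apply/rowP => j; rewrite /ab /det !mxE; ring.
case: (eqVneq det 0) => Hdet; last first.
  have aD : a \in D.
    have -> : a = det^-1 *: (br (br a b) (br a c) - zpq) by rewrite Epq addrK scalerA mulVf // scale1r.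
    by rewrite memvZ // memvB // ?memD // (subvP HP).
  have bD : b \in D.
    have -> : b = det^-1 *: (br (br a b) (br b c) - zpr) by rewrite Epr addrK scalerA mulVf // scale1r.
    by rewrite memvZ // memvB // ?memD // (subvP HP).
  have cD : c \in D.
    have -> : c = det^-1 *: (br (br a c) (br b c) - zqr) by rewrite Eqr addrK scalerA mulVf // scale1r.
    by rewrite memvZ // memvB // ?memD // (subvP HP).
  have fD : (fullv <= D)%VS.
    apply/subvP => x _; have [x1 [x2 [x3 [zx [Zx ->]]]]] := Hdec x.
    by rewrite !memvD ?memvZ // (subvP HP).
  have dsf : forall k, dser br k = fullv.
    elim=> // k IH; rewrite /= IH; apply/subv_anti/andP; split; [exact: subvf | exact: fD].
  case: Hsol => k; rewrite dsf => H0.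
  by have := dimvS (subvf D); rewrite HD3 H0 dimv0.
have Zpq' : br (br a b) (br a c) \in Z by rewrite Epq Hdet scale0r add0r.
have Zpr' : br (br a b) (br b c) \in Z by rewrite Epr Hdet scale0r add0r.
have Zqr' : br (br a c) (br b c) \in Z by rewrite Eqr Hdet scale0r add0r.
case: (eqVneq (br (br a b) (br a c)) 0) => [H1|H1]; last exact: final (memD _ _) (memD _ _) Zpq' H1.
case: (eqVneq (br (br a b) (br b c)) 0) => [H2|H2]; last exact: final (memD _ _) (memD _ _) Zpr' H2.
case: (eqVneq (br (br a c) (br b c)) 0) => [H3|H3]; last exact: final (memD _ _) (memD _ _) Zqr' H3.
rewrite Hpq in H1; rewrite Hpr in H2; rewrite Hqr in H3.
have [m1 m2 m3] := lc_inj H1.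
have [m4 m5 m6] := lc_inj H2.
have [m7 m8 m9] := lc_inj H3.
have L2 : (brv br fullv (brv br fullv fullv) <= Z)%VS.
  apply: brv_sub => u w _ Dw.
  have [d1 [d2 [d3 Ew]]] := Dcoord Dw.
  have [x1 [x2 [x3 [zx [Zx Ex]]]]] := Hdec u.
  have Ew' := Ew; rewrite K in Ew'.
  rewrite (C1 Zx (ZS _ _ _) Ex Ew') K; apply: ab0; last exact: ZS.
  - apply: (@eq_trans _ _ ((- x1 * d1 * (p1 * q3 - p3 * q1)) + (x1 * d2 * (p1 * q2 - - q3 * q1)) + (- x2 * d1 * (p1 * p1 - p3 * r1)) + (x2 * d2 * (p1 * - q1 - - q3 * r1)) + (x3 * d1 * (p1 * - q1 - - q3 * r1)) + (x3 * d2 * (q1 * - q1 - q2 * r1)))); first ring.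
    by rewrite ?m1 ?m2 ?m3 ?m4 ?m5 ?m6 ?m7 ?m8 ?m9; ring.
  - apply: (@eq_trans _ _ ((- x1 * d1 * (- q3 * q3 - p3 * q2)) + (x1 * d3 * (p1 * q2 - - q3 * q1)) + (x2 * d1 * (p1 * q3 - p3 * q1)) + (x2 * d3 * (p1 * - q1 - - q3 * r1)) + (- x3 * d1 * (p1 * q2 - - q3 * q1)) + (x3 * d3 * (q1 * - q1 - q2 * r1)))); first ring.
    by rewrite ?m1 ?m2 ?m3 ?m4 ?m5 ?m6 ?m7 ?m8 ?m9; ring.
  - apply: (@eq_trans _ _ ((- x1 * d2 * (- q3 * q3 - p3 * q2)) + (x1 * d3 * (p1 * q3 - p3 * q1)) + (x2 * d2 * (p1 * q3 - p3 * q1)) + (x2 * d3 * (p1 * p1 - p3 * r1)) + (- x3 * d2 * (p1 * q2 - - q3 * q1)) + (- x3 * d3 * (p1 * - q1 - - q3 * r1)))); first ring.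
    by rewrite ?m1 ?m2 ?m3 ?m4 ?m5 ?m6 ?m7 ?m8 ?m9; ring.
exfalso; apply: Hnil; exists 3%N; apply/eqP; rewrite -subv0 /=.
apply: brv_sub => u w _ Zw.
by rewrite (centerP' _ (subvP L2 _ Zw)) mem0v.
Qed.

End Coord.
End Gen.

Unset Implicit Arguments.

Theorem lemma3p1 (R : realType) (n : nat)
    (br : 'rV[R[i]]_n -> 'rV[R[i]]_n -> 'rV[R[i]]_n) :
  is_lie br -> pure br -> ~ nilpotent br -> solvable br -> has_breadth br 2 ->
  \dim (derived br) = 3%N ->
  (\dim (fullv : {vspace 'rV[R[i]]_n}) - \dim (centerv br))%N = 3%N ->
  exists x y z : 'rV[R[i]]_n,
    [/\ basis_of (derived br) [:: x; y; z],
        br x y = z, br x z = 0 & br y z = 0].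
Proof.
move=> [H1 H2 H3 H4] HP Hnil Hsol _ HD3 Hdim.
have dC : \dim (centerv br)^C = 3%N by rewrite dimv_compl.
have /andP[/eqP Hs _] := vbasisP ((centerv br)^C).
have Hsz : size (vbasis ((centerv br)^C)) = 3%N by rewrite size_tuple dC.
move: Hs Hsz; case: (tval (vbasis _)) => [|a [|b [|c [|? ?]]]] //= Hs _.
apply: (main_coord H1 H2 H3 H4 (a := a) (b := b) (c := c)) => //.
move=> x; have : x \in (centerv br + (centerv br)^C)%VS by rewrite addv_complf memvf.
move=> /memv_addP[zx Zx [w]]; rewrite -Hs => /span3P[k1 [k2 [k3 ->]]] ->.
by exists k1, k2, k3, zx; split => //; rewrite addrC.
Qed.
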